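(* Suppose that $A\neq B$ are strictly tree coloring equivalent $m\times m$ coloring matrices. Then there is a finite sequence $A=C_0,C_1,\dots,C_r=B$ with $r\ge1$ such that each $C_{s}$ is obtained from $C_{s-1}$ by one application of the following operation: given a coloring matrix $C=(c_{pq})$, disjoint sets $I,J\subseteq\{1,\dots,m\}$ with $|I|=|J|$ such that $\sum_{i\in I}t_C^{(i)}(n)=\sum_{j\in J}t_C^{(j)}(n)$ for all $n$, and a color $\ell$ with $c_{\ell i}=0$ for all $i\in I$ and $c_{\ell j}=1$ for all $j\in J$, replace $C$ by the matrix $C'$ that agrees with $C$ except that $c'_{\ell i}=1$ for $i\in I$ and $c'_{\ell j}=0$ for $j\in J$.
   Context: A plane tree is an unlabeled rooted tree in which the children of every vertex are linearly ordered. A coloring matrix is an $m\times m$ matrix $A=(a_{ij})$ with entries in $\{0,1\}$. An $A$-coloring of a plane tree assigns to each vertex a color in $\{1,\dots,m\}$ such that whenever a vertex of color $j$ is a child of a vertex of color $i$, $a_{ij}=1$. Let $t_A^{(i)}(n)$ be the number of pairs (plane tree with $n$ vertices, $A$-coloring of it) in which the root has color $i$. Two $m\times m$ coloring matrices $A,B$ are strictly tree coloring equivalent if $t_A^{(i)}(n)=t_B^{(i)}(n)$ for all $n\ge1$ and all $1\le i\le m$. *)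

(* Defs.v *)
From mathcomp Require Import all_boot all_algebra.
Set Implicit Arguments. Unset Strict Implicit. Unset Printing Implicit Defensive.

(* Colors are 'I_m (color k+1 of the paper is the ordinal k).
   A coloring matrix is an m x m matrix with 0/1 entries, encoded as bool. *)
Definition colmx (m : nat) := 'M[bool]_m.

(* A plane tree together with a coloring of its vertices by 'I_m: each vertex
   carries a color and an ordered list of children.  Pairs (plane tree,
   coloring) are in bijection with such colored plane trees. *)
Inductive ctree (m : nat) : Type := CNode : 'I_m -> seq (ctree m) -> ctree m.

Inductive ptree : Type := PNode : seq ptree -> ptree.
Fixpoint shape (m : nat) (t : ctree m) : ptree :=
  let: CNode _ ts := t in PNode (map (@shape m) ts).

Definition croot (m : nat) (t : ctree m) : 'I_m := let: CNode c _ := t in c.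

Fixpoint csize (m : nat) (t : ctree m) : nat :=
  let: CNode _ ts := t in (sumn (map (@csize m) ts)).+1.

Fixpoint valid (m : nat) (A : colmx m) (t : ctree m) : bool :=
  let: CNode c ts := t in all (fun u => A c (croot u) && valid A u) ts.

Fixpoint enum_trees (m : nat) (k n : nat) {struct k} : seq (ctree m) :=
  match k with
  | 0 => [::]
  | k'.+1 =>
    match n with
    | 0 => [::]
    | n'.+1 => [seq CNode c f | c <- enum 'I_m, f <- enum_forests m k' n']
    end
  end
with enum_forests (m : nat) (k n : nat) {struct k} : seq (seq (ctree m)) :=
  match k with
  | 0 => if n == 0 then [:: [::]] else [::]
  | k'.+1 =>
    match n with
    | 0 => [:: [::]]
    | _ => flatten [seq [seq t :: f | t <- enum_trees m k' j,
                                     f <- enum_forests m k' (n - j)]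
                   | j <- iota 1 n]
    end
  end.

(* all colored plane trees with n vertices (fuel 2n+1 is sufficient) *)
Definition ctrees (m n : nat) : seq (ctree m) := enum_trees m (n.*2.+1) n.

(* t_A^{(i)}(n): number of pairs (plane tree with n vertices, A-coloring)
   whose root has color i. *)
Definition tcount (m : nat) (A : colmx m) (i : 'I_m) (n : nat) : nat :=
  count (fun t => (croot t == i) && valid A t) (ctrees m n).

Definition strictly_tree_coloring_equivalent (m : nat) (A B : colmx m) : Prop :=
  forall n, 0 < n -> forall i : 'I_m, tcount A i n = tcount B i n.

Definition switch_step (m : nat) (C C' : colmx m) : Prop :=
  exists (I J : {set 'I_m}) (l : 'I_m),
    [/\ [disjoint I & J] /\ #|I| = #|J|,
        (forall n, 0 < n ->
           \sum_(i in I) tcount C i n = \sum_(j in J) tcount C j n),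
        (forall i, i \in I -> C l i = false),
        (forall j, j \in J -> C l j = true) &
        C' = (\matrix_(p, q) (if p == l then
                               (if q \in I then true
                                else if q \in J then false else C p q)
                             else C p q))%R].

(* Main.v *)
Require Import Defs.
From mathcomp Require Import all_boot all_algebra zify.
Set Implicit Arguments. Unset Strict Implicit. Unset Printing Implicit Defensive.

Section S.
Variable m : nat.

Lemma ef_S k n : enum_forests m k.+1 n.+1 =
  flatten [seq [seq t :: f | t <- enum_trees m k j,
                             f <- enum_forests m k (n.+1 - j)]
           | j <- iota 1 n.+1].
Proof. by []. Qed.
Lemma et_S k n : enum_trees m k.+1 n.+1 =
  [seq CNode c f | c <- enum 'I_m, f <- enum_forests m k n].
Proof. by []. Qed.

Lemma stab k : forall n, (n.*2 <= k.+1 -> enum_trees m k n = enum_trees m k.+1 n) /\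
  (n.*2 <= k -> enum_forests m k n = enum_forests m k.+1 n).
Proof.
elim: k => [|k IH] n.
  split; case: n => [|n] //=; lia.
split.
  case: n => [|n] //= H.
  by rewrite (IH n).2 //; lia.
case: n => [|n] // H.
rewrite !ef_S.
congr (flatten _); apply/eq_in_map => j; rewrite mem_iota => /andP[j1 j2].
rewrite (IH j).1; last lia.
by rewrite (IH (n.+1 - j)).2 //; lia.
Qed.

Lemma stab_trees n a b : n.*2 <= a.+1 -> a <= b -> enum_trees m a n = enum_trees m b n.
Proof.
move=> Ha; elim: b => [|b IH] Hb; first by move: Hb; rewrite leqn0 => /eqP->.
case: (ltngtP a b.+1) Hb => // [Hlt|->] _ ; last by [].
by rewrite IH // (stab b n).1 //; lia.
Qed.

Lemma stab_forests n a b : n.*2 <= a -> a <= b -> enum_forests m a n = enum_forests m b n.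
Proof.
move=> Ha; elim: b => [|b IH] Hb; first by move: Hb; rewrite leqn0 => /eqP->.
case: (ltngtP a b.+1) Hb => // [Hlt|->] _ ; last by [].
by rewrite IH // (stab b n).2 //; lia.
Qed.

Lemma stabT n a b : n.*2 <= a.+1 -> n.*2 <= b.+1 -> enum_trees m a n = enum_trees m b n.
Proof.
move=> Ha Hb; case: (leqP a b) => H; first exact: stab_trees.
by symmetry; apply: stab_trees => //; apply: ltnW.
Qed.
Lemma stabF n a b : n.*2 <= a -> n.*2 <= b -> enum_forests m a n = enum_forests m b n.
Proof.
move=> Ha Hb; case: (leqP a b) => H; first exact: stab_forests.
by symmetry; apply: stab_forests => //; apply: ltnW.
Qed.

Lemma count_allpairs (T1 T2 T3 : Type) (g : T1 -> T2 -> T3) (a : pred T3)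
   (p : pred T1) (q : pred T2) s t :
  (forall x y, a (g x y) = p x && q y) ->
  count a [seq g x y | x <- s, y <- t] = count p s * count q t.
Proof.
move=> H; elim: s => [|x s IH] //=.
rewrite count_cat IH count_map mulnDl; congr (_ + _).
case Hp: (p x) => /=.
  by rewrite mul1n; apply: eq_count => y /=; rewrite H Hp.
by rewrite mul0n (eq_count (a2 := pred0)) ?count_pred0 // => y /=; rewrite H Hp.
Qed.

Lemma count_andl (T : Type) (b : bool) (p : pred T) s :
  count (fun x => b && p x) s = b * count p s.
Proof. by case: b => //=; rewrite ?mul1n ?mul0n // count_pred0. Qed.

Lemma sumn_big (T : Type) (F : T -> nat) s : sumn [seq F x | x <- s] = \sum_(x <- s) F x.
Proof. by elim: s => [|x s IH]; rewrite ?big_nil ?big_cons //= IH. Qed.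

Definition allv (C : colmx m) (i : 'I_m) (f : seq (ctree m)) :=
  all (fun u => C i (croot u) && valid C u) f.
Definition FF n := enum_forests m n.*2 n.
Definition fc (C : colmx m) i n := count (allv C i) (FF n).
Definition gc (C : colmx m) i j := count (fun t => C i (croot t) && valid C t) (ctrees m j).

Lemma tc0 (C : colmx m) (i : 'I_m) : tcount C i 0 = 0.
Proof. by []. Qed.

Lemma tc_S (C : colmx m) (i : 'I_m) n : tcount C i n.+1 = fc C i n.
Proof.
rewrite /tcount /ctrees doubleS et_S (stabF (a := (n.*2).+2) (b := n.*2)) //; last by lia.
rewrite count_flatten -map_comp sumn_big.
under eq_bigr => c _ do rewrite /= count_map.
rewrite big_enum /= (bigD1 i) //= big1 ?addn0.
  by rewrite /fc; apply: eq_count => f /=; rewrite eqxx.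
move=> c Hc; rewrite (@eq_count _ _ (fun f => false && allv C c f)) ?count_andl //.
by move=> f /=; rewrite (negbTE Hc).
Qed.

Lemma fc0 (C : colmx m) (i : 'I_m) : fc C i 0 = 1.
Proof. by []. Qed.

Lemma fc_S (C : colmx m) (i : 'I_m) n : fc C i n.+1 = \sum_(1 <= j < n.+2) gc C i j * fc C i (n.+1 - j).
Proof.
rewrite /fc /FF doubleS ef_S count_flatten -map_comp sumn_big.
apply: eq_big_seq => j; rewrite mem_iota => /andP[j1 j2]; rewrite /comp.
rewrite (stabT (a := n.*2.+1) (b := j.*2.+1)); [|lia|lia].
rewrite (stabF (a := n.*2.+1) (b := (n.+1 - j).*2)); [|lia|lia].
by apply: count_allpairs.
Qed.

Lemma gc_sum (C : colmx m) (i : 'I_m) j : gc C i j = \sum_c C i c * tcount C c j.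
Proof.
rewrite /gc /tcount; elim: (ctrees m j) => [|x s IH] /=.
  by rewrite big1 // => c _; rewrite muln0.
rewrite IH; under [RHS]eq_bigr => c _ do rewrite mulnDr.
rewrite big_split /=; congr (_ + _).
rewrite (bigD1 (croot x)) //= eqxx /= big1 ?addn0 ?mulnb //.
by move=> c /negbTE Hc; rewrite eq_sym Hc muln0.
Qed.
End S.

Definition rec (h f : nat -> nat) :=
  f 0 = 1 /\ forall n, f n.+1 = \sum_(1 <= j < n.+2) h j * f (n.+1 - j).

Lemma rec_eq h1 f1 h2 f2 N : rec h1 f1 -> rec h2 f2 ->
  (forall j, 1 <= j <= N -> h1 j = h2 j) -> forall k, k <= N -> f1 k = f2 k.
Proof.
move=> [R10 R1] [R20 R2] Hh k.
elim: k {-2}k (leqnn k) => [|k IH] [|n] //= Hn HN; try by rewrite R10 R20.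
rewrite R1 R2; apply: eq_big_nat => j /andP[j1 j2].
rewrite Hh ?j1 /=; last by lia.
by rewrite IH //; lia.
Qed.

Lemma rec_inj h1 f1 h2 f2 : rec h1 f1 -> rec h2 f2 ->
  (forall k, f1 k = f2 k) -> forall j, 1 <= j -> h1 j = h2 j.
Proof.
move=> [R10 R1] [R20 R2] Hf j.
elim: j {-2}j (leqnn j) => [|j IH] [|n] //= Hn _.
have := Hf n.+1; rewrite R1 R2 !(big_nat_recr n.+1) //= subnn R10 R20 !muln1.
rewrite (@eq_big_nat _ _ _ 1 n.+1 _ (fun j => h2 j * f2 (n.+1 - j))).
  by move/addnI.
move=> i /andP[i1 i2]; rewrite IH ?Hf //; lia.
Qed.

Lemma rec_fc m (C : colmx m) i : rec (gc C i) (fc C i).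
Proof. by split; [exact: fc0 | exact: fc_S]. Qed.

Lemma gc_AB m (A B : colmx m) : strictly_tree_coloring_equivalent A B ->
  forall i j, 1 <= j -> gc A i j = gc B i j.
Proof.
move=> HAB i; apply: (rec_inj (rec_fc A i) (rec_fc B i)) => k.
by rewrite -!tc_S HAB.
Qed.

Lemma tcount_mix m (A B D : colmx m) : strictly_tree_coloring_equivalent A B ->
  (forall i, (forall q, D i q = A i q) \/ (forall q, D i q = B i q)) ->
  forall n i, tcount D i n = tcount A i n.
Proof.
move=> HAB HD n.
elim: n {-2}n (leqnn n) => [|n IH] [|k] Hk i //.
rewrite !tc_S; apply: (rec_eq (rec_fc D i) (rec_fc A i) (N:=k)) => // j /andP[j1 j2].
have E : forall c, tcount D c j = tcount A c j by move=> c; apply: IH; lia.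
rewrite !gc_sum; under eq_bigr => c _ do rewrite E.
case: (HD i) => H; under eq_bigr => c _ do rewrite H; first by [].
have E2 : forall c, tcount A c j = tcount B c j by move=> c; rewrite HAB.
under eq_bigr => c _ do rewrite E2.
by rewrite -gc_sum -(gc_AB HAB) // gc_sum.
Qed.

Lemma sum_in (T : finType) (P : pred T) (F : T -> nat) :
  \sum_(c | P c) F c = \sum_c P c * F c.
Proof.
by rewrite big_mkcond; apply: eq_bigr => c _; case: (P c); rewrite ?mul1n ?mul0n.
Qed.

Theorem theorem19 (m : nat) (A B : colmx m) :
  A != B -> strictly_tree_coloring_equivalent A B ->
  exists (r : nat) (Cs : nat -> colmx m),
    [/\ 1 <= r, Cs 0 = A, Cs r = B &
        forall s, 1 <= s <= r -> switch_step (Cs s.-1) (Cs s)].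
Proof.
move=> nAB HAB.
have m0 : 0 < m.
  case: m A B nAB {HAB} => // A B; case/negP; apply/eqP/matrixP => [[]] //.
exists m, (fun s => \matrix_(p, q) (if (val p < s)%N then B p q else A p q))%R.
split => //.
- by apply/matrixP => p q; rewrite mxE ltn0.
- by apply/matrixP => p q; rewrite mxE ltn_ord.
move=> s /andP[s1 s2].
have ls : s.-1 < m by lia.
set l := Ordinal ls.
set C := (\matrix_(p, q) (if (val p < s.-1)%N then B p q else A p q))%R.
have tC : forall n i, tcount C i n = tcount A i n.
  apply: (tcount_mix HAB) => i; case: (boolP (i < s.-1)) => H; [right|left] => q;
    by rewrite mxE /= ?H ?(negbTE H).
exists [set q | ~~ A l q && B l q], [set q | A l q && ~~ B l q], l.
have key : forall n, 0 < n ->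
    \sum_(i in [set q | ~~ A l q && B l q]) tcount C i n =
    \sum_(j in [set q | A l q && ~~ B l q]) tcount C j n.
  move=> n n0.
  have H := gc_AB HAB l n0; rewrite !gc_sum in H.
  rewrite [X in _ = X](eq_bigr (fun c => B l c * tcount A c n)) in H; last first.
    by move=> c _; rewrite HAB.
  move: H.
  rewrite (sum_in (fun c => c \in [set q | ~~ A l q && B l q]) (fun c => tcount C c n)).
  rewrite (sum_in (fun c => c \in [set q | A l q && ~~ B l q]) (fun c => tcount C c n)).
  have eB : \sum_c B l c * tcount A c n =
     \sum_c (A l c && B l c) * tcount A c n +
     \sum_c (c \in [set q | ~~ A l q && B l q]) * tcount C c n.
    rewrite -big_split; apply: eq_bigr => c _; rewrite inE tC.
    by case: (A l c); case: (B l c); rewrite /= ?mul1n ?mul0n ?addn0 ?add0n.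
  have eA : \sum_c A l c * tcount A c n =
     \sum_c (A l c && B l c) * tcount A c n +
     \sum_c (c \in [set q | A l q && ~~ B l q]) * tcount C c n.
    rewrite -big_split; apply: eq_bigr => c _; rewrite inE tC.
    by case: (A l c); case: (B l c); rewrite /= ?mul1n ?mul0n ?addn0 ?add0n.
  by rewrite eA eB => /addnI.
split.
- split.
    by apply/pred0P => q /=; rewrite !inE; case: (A l q); case: (B l q).
  have := key 1 isT.
  under eq_bigr => c _ do rewrite tc_S fc0.
  under [in RHS]eq_bigr => c _ do rewrite tc_S fc0.
  by rewrite !sum1_card.
- exact: key.
- by move=> i; rewrite !inE mxE /= ltnn => /andP[/negbTE].
- by move=> i; rewrite !inE mxE /= ltnn => /andP[].
apply/matrixP => p q; rewrite !mxE.
case: eqP => [->|Hne].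
  rewrite /= (_ : s.-1 < s) ?ltnn ?inE; last lia.
  by case: (A l q); case: (B l q).
have Hp : val p != s.-1 by apply/eqP => H; apply: Hne; apply: val_inj.
have -> : (val p < s) = (val p < s.-1) by lia.
by [].
Qed.
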